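(* Let $G$ and $H$ be Markov-equivalent DAGs on the same vertex set, and let $j$ be a sink node of $G$ that is not a sink node of $H$. Suppose $H$ has at least two edges, one of which is $j\to l$. If every edge $i\to k$ of $H$ other than $j\to l$ satisfies $j\in\mathrm{pa}_H(k)$, then $j$ is a source node of a connected component of $H$ that is complete (any two of its vertices are adjacent), and every other connected component of $H$ is an isolated vertex.
   Context: Two DAGs are Markov equivalent iff they have the same skeleton (underlying undirected graph) and the same v-structures (edges $i\to k\leftarrow m$ with $i,m$ nonadjacent). A sink has no outgoing edges; a source has no incoming edges; connected components are those of the skeleton. *)

(* Defs.v *)
(* A directed graph on a finite vertex set V is a relation
   G : rel V, with G x y meaning the edge x -> y. *)
From mathcomp Require Import all_boot.
Set Implicit Arguments. Unset Strict Implicit. Unset Printing Implicit Defensive.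

Section DAG.
Variable V : finType.

Definition is_dag (G : rel V) : Prop :=
  forall x y, G x y -> ~~ connect G y x.

Definition adj (G : rel V) : rel V := fun x y => G x y || G y x.

Definition vstruct (G : rel V) (i k m : V) : bool :=
  [&& G i k, G m k, i != m & ~~ adj G i m].

Definition markov_equiv (G H : rel V) : Prop :=
  (forall x y, adj G x y = adj H x y) /\
  (forall i k m, vstruct G i k m = vstruct H i k m).

Definition is_sink (G : rel V) (j : V) : Prop := forall y, ~~ G j y.
Definition is_source (G : rel V) (j : V) : Prop := forall y, ~~ G y j.

Definition same_comp (G : rel V) (x y : V) : bool := connect (adj G) x y.

Definition num_edges (G : rel V) : nat := #|[set e : V * V | G e.1 e.2]|.

End DAG.

(* Main.v *)
Require Import Defs.
From mathcomp Require Import all_boot.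

Theorem mainTheorem17 (V : finType) (G H : rel V) (j l : V) :
  is_dag G -> is_dag H -> markov_equiv G H ->
  is_sink G j -> ~ is_sink H j ->
  2 <= num_edges H -> H j l ->
  (forall i k, H i k -> (i, k) != (j, l) -> H j k) ->
  [/\ is_source H j,
      (forall x y, same_comp H j x -> same_comp H j y -> x != y -> adj H x y)
    & (forall x, ~~ same_comp H j x -> forall y, ~~ adj H x y)].
Proof.
move=> dG dH [eA eV] sG _ _ Hjl hyp.
have noloop : forall x, ~~ H x x.
  by move=> x; apply/negP=> Hxx; move: (dH _ _ Hxx); rewrite connect0.
have head : forall a b, H a b -> H j b.
  move=> a b Hab; case: (eqVneq (a, b) (j, l)) => [[_ ->]|ne] //.
  exact: hyp ne.
have src : is_source H j.
  by move=> y; apply/negP=> /head; apply/negP.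
have tail : forall a b, H a b -> (a == j) || H j a.
  move=> a b Hab; case: (eqVneq a j) => //= naj.
  apply/negPn/negP=> nja.
  have nadj : ~~ adj H a j.
    by rewrite /adj negb_or nja andbT; apply/negP=> /head; apply/negP.
  have vs : vstruct H a b j by rewrite /vstruct Hab (head _ _ Hab) naj nadj.
  rewrite -eV in vs; case/and4P: vs => _ Gjb _ _.
  by move: (sG b); rewrite Gjb.
have Lin : forall x y, adj H x y -> ((x == j) || H j x) && ((y == j) || H j y).
  move=> x y /orP[] Hxy.
    by rewrite (tail _ _ Hxy) (head _ _ Hxy) orbT.
  by rewrite (tail _ _ Hxy) (head _ _ Hxy) orbT.
have comp : forall x, same_comp H j x -> (x == j) || H j x.
  move=> x /connectP[p pth ->]; elim/last_ind: p pth => [|p z _] /=.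
    by rewrite eqxx.
  rewrite rcons_path last_rcons => /andP[_ /Lin /andP[]] //.
split=> //.
  move=> x y /comp cx /comp cy nxy.
  case: (eqVneq x j) cx nxy => [->|nxj] /= cx nxy.
    case: (eqVneq y j) cy nxy => [->|_] /= cy nxy; first by move: nxy; rewrite ?eqxx.
    by rewrite /adj cy.
  case: (eqVneq y j) cy nxy => [->|nyj] /= cy nxy.
    by rewrite /adj cx orbT.
  apply/negPn/negP=> nadj.
  have Gxj : G x j.
    have : adj G x j by rewrite eA /adj cx orbT.
    by rewrite /adj (negbTE (sG x)) orbF.
  have Gyj : G y j.
    have : adj G y j by rewrite eA /adj cy orbT.
    by rewrite /adj (negbTE (sG y)) orbF.
  have vs : vstruct G x j y by rewrite /vstruct Gxj Gyj nxy eA nadj.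
  rewrite eV in vs; case/and4P: vs => Hxj _ _ _.
  by move: (src x); rewrite Hxj.
move=> x nc y; apply/negP=> /Lin /andP[cx _]; move/negP: nc; apply.
case: (eqVneq x j) cx => [->|_] /= cx; first exact: connect0.
by apply: connect1; rewrite /adj cx.
Qed.
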